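(* Let $N$ be a finite set and $F:2^N\to\mathbb{R}$. Then $F$ is quasi-submodular if and only if $F$ satisfies the single sub-crossing property.
   Context: For $A\subseteq N$, $i\in N$, write $A+i=A\cup\{i\}$. $F$ is quasi-submodular if for all $X,Y\subseteq N$ both hold: $F(X\cap Y)\ge F(X)\Rightarrow F(Y)\ge F(X\cup Y)$, and $F(X\cap Y)>F(X)\Rightarrow F(Y)>F(X\cup Y)$. $F$ satisfies the single sub-crossing property if for all $A\subseteq B\subseteq N$ and $i\in N\setminus B$ both hold: $F(A)\ge F(B)\Rightarrow F(A+i)\ge F(B+i)$, and $F(A)>F(B)\Rightarrow F(A+i)>F(B+i)$. *)

(* Defs.v *)
From mathcomp Require Import all_boot all_order all_algebra.
Set Implicit Arguments. Unset Strict Implicit. Unset Printing Implicit Defensive.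
Import Order.TTheory GRing.Theory Num.Theory.
Local Open Scope ring_scope.

Definition quasi_submodular (N : finType) (R : realFieldType) (F : {set N} -> R) : Prop :=
  forall X Y : {set N},
    (F X <= F (X :&: Y) -> F (X :|: Y) <= F Y) /\
    (F X < F (X :&: Y) -> F (X :|: Y) < F Y).

Definition single_sub_crossing (N : finType) (R : realFieldType) (F : {set N} -> R) : Prop :=
  forall (A B : {set N}) (i : N), A \subset B -> i \notin B ->
    (F B <= F A -> F (i |: B) <= F (i |: A)) /\
    (F B < F A -> F (i |: B) < F (i |: A)).

(* Main.v *)
Require Import Defs.
From mathcomp Require Import all_boot all_order all_algebra.
Set Implicit Arguments. Unset Strict Implicit. Unset Printing Implicit Defensive.
Import Order.TTheory GRing.Theory Num.Theory.
Local Open Scope ring_scope.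

Lemma chain (R : realFieldType) (N : finType) (F : {set N} -> R) (r : rel R)
  (hs : forall (A B : {set N}) i, A \subset B -> i \notin B ->
          r (F B) (F A) -> r (F (i |: B)) (F (i |: A)))
  (X Z : {set N}) (hZ : Z \subset X) (h0 : r (F X) (F Z)) :
  forall S : {set N}, [disjoint S & X] -> r (F (X :|: S)) (F (Z :|: S)).
Proof.
move=> S; move: {2}#|S| (erefl #|S|) => n; elim: n S => [|n IH] S hn hd.
  move/eqP: hn; rewrite cards_eq0 => /eqP ->; by rewrite !setU0.
have : (0 < #|S|)%N by rewrite hn.
case/card_gt0P => i hi.
have hS : S = i |: (S :\ i) by rewrite setD1K.
have hd' : [disjoint S :\ i & X].
  move: hd; rewrite !disjoints_subset; apply: subset_trans; apply: subD1set.
have hc : #|S :\ i| = n by move: hn; rewrite (cardsD1 i S) hi add1n => -[].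
have IH' := IH _ hc hd'.
rewrite hS (setUCA X [set i]) (setUCA Z [set i]); apply: hs => //.
  by apply: setSU.
rewrite !inE negb_or eqxx /= andbT.
by move: hd => /disjointFr ->.
Qed.

Theorem proposition2 (R : realFieldType) (N : finType) (F : {set N} -> R) :
  quasi_submodular F <-> single_sub_crossing F.
Proof.
split.
  move=> hq A B i hAB hiB.
  have e1 : B :&: (i |: A) = A.
    apply/setP=> x; rewrite !inE; case: (x =P i) => [->|_] /=.
      by rewrite (negbTE hiB); case: (boolP (i \in A)) => // /(subsetP hAB); rewrite (negbTE hiB).
    by case: (boolP (x \in A)) => [/(subsetP hAB)->|]//; rewrite andbF.
  have e2 : B :|: (i |: A) = i |: B.
    apply/setP=> x; rewrite !inE; case: (x == i); rewrite ?orbT //=.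
    by case: (boolP (x \in A)) => [/(subsetP hAB)->|]//; rewrite orbF.
  by have [h1 h2] := hq B (i |: A); rewrite e1 e2 in h1 h2.
move=> hs X Y.
have hZ : X :&: Y \subset X by apply: subsetIl.
have hd : [disjoint Y :\: X & X].
  by rewrite disjoints_subset; apply: subsetDr.
have e1 : X :|: (Y :\: X) = X :|: Y.
  by apply/setP=> x; rewrite !inE; case: (x \in X); rewrite ?orbT ?andbT.
have e2 : (X :&: Y) :|: (Y :\: X) = Y.
  by apply/setP=> x; rewrite !inE; case: (x \in X); case: (x \in Y).
split=> h.
  have := chain (r := fun a b => a <= b) (fun A B i h1 h2 => (hs A B i h1 h2).1) hZ h hd.
  by rewrite e1 e2.
have := chain (r := fun a b => a < b) (fun A B i h1 h2 => (hs A B i h1 h2).2) hZ h hd.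
by rewrite e1 e2.
Qed.
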